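(* Let $A$ and $B$ be differential rings and $\nu\colon A\to B$ a differential homomorphism. Suppose $B$ is differentially generated over $\nu(A)$ by finitely many elements $\eta_1,\ldots,\eta_m$, and that for each generator $\eta_j$ there exist $b_1,\ldots,b_n\in A$ (depending on $j$) such that $\nu(b_k)\eta_j\in\nu(A)$ for all $k$ and $\{b_1,\ldots,b_n\}=A$. Then the contraction map $\nu^*\colon\operatorname{Spec}^\Delta B\to V(\ker\nu)$, $\mathfrak q\mapsto \nu^{-1}(\mathfrak q)$, is a homeomorphism, where $V(\ker\nu)\subseteq\operatorname{Spec}^\Delta A$ carries the subspace topology.
   Context: All rings are commutative with unit; homomorphisms preserve the unit. A differential ring is a ring equipped with finitely many pairwise commuting derivations; a differential homomorphism is a ring homomorphism commuting with the derivations. $B$ is differentially generated over $\nu(A)$ by $\eta_1,\dots,\eta_m$ if $B$ is the smallest differential subring of $B$ containing $\nu(A)$ and $\eta_1,\dots,\eta_m$. For a differential ring $A$, $\operatorname{Spec}^\Delta A$ is the set of prime ideals of $A$ closed under all the derivations (prime differential ideals); for $E\subseteq A$, $V(E)$ is the set of prime differential ideals containing $E$, and the sets $V(E)$ are the closed sets of the Kolchin topology on $\operatorname{Spec}^\Delta A$. For $E\subseteq A$, $\{E\}$ denotes the smallest radical differential ideal of $A$ containing $E$. *)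

(* Defs.v *)
From HB Require Import structures.
From mathcomp Require Import all_boot all_order all_algebra.
Set Implicit Arguments. Unset Strict Implicit. Unset Printing Implicit Defensive.
Import GRing.Theory.
Local Open Scope ring_scope.

Definition is_derivation (R : comPzRingType) (D : R -> R) : Prop :=
  (forall x y : R, D (x + y) = D x + D y) /\
  (forall x y : R, D (x * y) = D x * y + x * D y).

Definition is_diff_ring (R : comPzRingType) (d : nat) (D : 'I_d -> R -> R) : Prop :=
  (forall i, is_derivation (D i)) /\
  (forall i j (x : R), D i (D j x) = D j (D i x)).

(* differential homomorphism (the ring homomorphism part is given by
   {rmorphism A -> B}) *)
Definition commutes_with_ders (A B : comPzRingType) (d : nat)
  (DA : 'I_d -> A -> A) (DB : 'I_d -> B -> B) (nu : A -> B) : Prop :=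
  forall i (a : A), nu (DA i a) = DB i (nu a).

Definition is_ideal (R : comPzRingType) (I : R -> Prop) : Prop :=
  [/\ I 0, (forall x y, I x -> I y -> I (x + y)) & (forall r x, I x -> I (r * x))].

Definition is_diff_closed (R : comPzRingType) (d : nat) (D : 'I_d -> R -> R)
  (I : R -> Prop) : Prop := forall i x, I x -> I (D i x).

Definition is_prime_diff_ideal (R : comPzRingType) (d : nat) (D : 'I_d -> R -> R)
  (I : R -> Prop) : Prop :=
  [/\ is_ideal I, is_diff_closed D I, ~ I 1 &
      (forall x y, I (x * y) -> I x \/ I y)].

Definition is_radical_diff_ideal (R : comPzRingType) (d : nat) (D : 'I_d -> R -> R)
  (I : R -> Prop) : Prop :=
  [/\ is_ideal I, is_diff_closed D I & (forall x n, I (x ^+ n.+1) -> I x)].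

(* {E} : the smallest radical differential ideal containing E. *)
Definition rad_diff_ideal_gen (R : comPzRingType) (d : nat) (D : 'I_d -> R -> R)
  (E : R -> Prop) : R -> Prop :=
  fun x => forall I, is_radical_diff_ideal D I -> (forall e, E e -> I e) -> I x.

Definition is_diff_subring (R : comPzRingType) (d : nat) (D : 'I_d -> R -> R)
  (S : R -> Prop) : Prop :=
  [/\ S 1, (forall x y, S x -> S y -> S (x - y)),
      (forall x y, S x -> S y -> S (x * y)) & is_diff_closed D S].

Definition diff_generated (A B : comPzRingType) (d : nat) (DB : 'I_d -> B -> B)
  (nu : A -> B) (m : nat) (eta : 'I_m -> B) : Prop :=
  forall S : B -> Prop, is_diff_subring DB S ->
    (forall a, S (nu a)) -> (forall j, S (eta j)) -> forall b, S b.

Definition SpecD (R : comPzRingType) (d : nat) (D : 'I_d -> R -> R) : Type :=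
  { P : R -> Prop | is_prime_diff_ideal D P }.

Definition kolchin_closed (R : comPzRingType) (d : nat) (D : 'I_d -> R -> R)
  (C : SpecD D -> Prop) : Prop :=
  exists E : R -> Prop, forall P : SpecD D, C P <-> (forall e, E e -> proj1_sig P e).

Definition VD (R : comPzRingType) (d : nat) (D : 'I_d -> R -> R) (K : R -> Prop)
  : Type := { P : SpecD D | forall e, K e -> proj1_sig P e }.

Definition VD_closed (R : comPzRingType) (d : nat) (D : 'I_d -> R -> R)
  (K : R -> Prop) (C : VD D K -> Prop) : Prop :=
  exists C' : SpecD D -> Prop, kolchin_closed C' /\
    forall P : VD D K, C P <-> C' (proj1_sig P).

Definition continuous_cl (X Y : Type) (clX : (X -> Prop) -> Prop)
  (clY : (Y -> Prop) -> Prop) (f : X -> Y) : Prop :=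
  forall C : Y -> Prop, clY C -> clX (fun x => C (f x)).

Definition homeomorphism (X Y : Type) (clX : (X -> Prop) -> Prop)
  (clY : (Y -> Prop) -> Prop) (f : X -> Y) : Prop :=
  exists g : Y -> X, [/\ cancel f g, cancel g f,
    continuous_cl clX clY f & continuous_cl clY clX g].

(* Main.v *)
Require Import Defs.
From HB Require Import structures.
From mathcomp Require Import all_boot all_order all_algebra.
From Stdlib Require Import Classical FunctionalExtensionality PropExtensionality ProofIrrelevance.
Import GRing.Theory.
Local Open Scope ring_scope.
Set Implicit Arguments. Unset Strict Implicit.

Lemma prime_rad (A : comPzRingType) (d : nat) (DA : 'I_d -> A -> A) (p : A -> Prop) :
  is_prime_diff_ideal DA p -> forall x n, p (x ^+ n.+1) -> p x.
Proof.
case=> _ _ _ hpr x; elim=> [|n IH]; first by rewrite expr1.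
by rewrite exprS => /hpr [] // /IH.
Qed.

Lemma prime_rdi (A : comPzRingType) (d : nat) (DA : 'I_d -> A -> A) (p : A -> Prop) :
  is_prime_diff_ideal DA p -> is_radical_diff_ideal DA p.
Proof.
move=> hp; have := prime_rad hp; case: hp => *; by split.
Qed.

Lemma alg1 (R : comPzRingType) (a b x y : R) :
  (a * b) * (x - y) = b * (a * x) - a * (b * y).
Proof. by rewrite mulrBr -!mulrA [a * (b * x)]mulrCA. Qed.

Lemma alg2 (R : comPzRingType) (a b x y : R) :
  (a * b) * (x * y) = (a * x) * (b * y).
Proof. by rewrite -!mulrA; congr (_ * _); rewrite mulrCA. Qed.

Lemma alg3 (R : comPzRingType) (a b x y : R) :
  (a * b) * (x + y) = b * (a * x) + a * (b * y).
Proof. by rewrite mulrDr -!mulrA [a * (b * x)]mulrCA. Qed.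

Lemma der_frac (A B : comPzRingType) (d : nat)
  (DA : 'I_d -> A -> A) (DB : 'I_d -> B -> B) (hB : is_diff_ring DB)
  (nu : {rmorphism A -> B}) (hnu : commutes_with_ders DA DB nu) i s x a :
  nu s * x = nu a -> nu (s * s) * DB i x = nu (s * DA i a - DA i s * a).
Proof.
move=> e.
have [_ hL] := hB.1 i.
have := hL (nu s) x; rewrite e -!hnu => H.
have E : nu s * DB i x = nu (DA i a) - nu (DA i s) * x.
  by rewrite H [_ + nu s * _]addrC addrK.
by rewrite rmorphM -mulrA E mulrBr rmorphB !rmorphM -e mulrCA.
Qed.

Lemma ideal_sub (R : comPzRingType) (d : nat) (D : 'I_d -> R -> R) (p : R -> Prop) :
  is_prime_diff_ideal D p -> forall x y, p x -> p y -> p (x - y).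
Proof.
case=> [[p0 pD pM]] _ _ _ x y hx hy; apply: pD => //.
by rewrite -mulN1r; apply: pM.
Qed.

Lemma frac (A B : comPzRingType) (d : nat)
  (DA : 'I_d -> A -> A) (DB : 'I_d -> B -> B) (hB : is_diff_ring DB)
  (nu : {rmorphism A -> B}) (hnu : commutes_with_ders DA DB nu)
  (m : nat) (eta : 'I_m -> B)
  (hgen : diff_generated DB nu eta)
  (hb : forall j : 'I_m, exists (n : nat) (b : 'I_n -> A),
      (forall k, exists a : A, nu (b k) * eta j = nu a) /\
      (forall x : A, rad_diff_ideal_gen DA (fun y => exists k, y = b k) x))
  (p : A -> Prop) (hp : is_prime_diff_ideal DA p) :
  forall x, exists s a, ~ p s /\ nu s * x = nu a.
Proof.
have hrd := prime_rdi hp.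
case: hp => [[p0 pD pM]] pd p1 hpr.
have notb j : exists s a, ~ p s /\ nu s * eta j = nu a.
  have [n [b [hb1 hb2]]] := hb j.
  have [k hk]: exists k, ~ p (b k).
    apply: NNPP => H; apply: p1; apply: (hb2 1) hrd _ => e [k ->].
    by apply: NNPP => ?; apply: H; exists k.
  have [a ha] := hb1 k.
  by exists (b k), a.
apply: hgen.
- split.
  + by exists 1, 1; split => //; rewrite mulr1 rmorph1.
  + move=> x y [s1 [a1 [n1 e1]]] [s2 [a2 [n2 e2]]].
    exists (s1 * s2), (s2 * a1 - s1 * a2); split; first by case/hpr.
    by rewrite rmorphM alg1 e1 e2 rmorphB !rmorphM.
  + move=> x y [s1 [a1 [n1 e1]]] [s2 [a2 [n2 e2]]].
    exists (s1 * s2), (a1 * a2); split; first by case/hpr.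
    by rewrite rmorphM alg2 e1 e2 rmorphM.
  + move=> i x [s [a [ns e]]].
    exists (s * s), (s * DA i a - DA i s * a); split; first by case/hpr.
    exact: der_frac.
- by move=> a; exists 1, a; rewrite rmorph1 mul1r; split.
- exact: notb.
Qed.

Definition qset (A B : comPzRingType) (nu : {rmorphism A -> B}) (p : A -> Prop) (x : B) :=
  exists s a, ~ p s /\ p a /\ nu s * x = nu a.

Lemma ker_sub (A B : comPzRingType) (d : nat) (DA : 'I_d -> A -> A)
  (nu : {rmorphism A -> B}) (p : A -> Prop) (hp : is_prime_diff_ideal DA p)
  (hker : forall a, nu a = 0 -> p a) x y : nu x = nu y -> p y -> p x.
Proof.
move=> e py.
have h1 : p (x - y) by apply: hker; rewrite rmorphB e subrr.
have p0 : p 0 by case: hp => [[]].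
have := ideal_sub hp h1 (ideal_sub hp p0 py).
by rewrite sub0r opprK subrK.
Qed.

Lemma q_prime (A B : comPzRingType) (d : nat)
  (DA : 'I_d -> A -> A) (DB : 'I_d -> B -> B) (hB : is_diff_ring DB)
  (nu : {rmorphism A -> B}) (hnu : commutes_with_ders DA DB nu)
  (m : nat) (eta : 'I_m -> B)
  (hgen : diff_generated DB nu eta)
  (hb : forall j : 'I_m, exists (n : nat) (b : 'I_n -> A),
      (forall k, exists a : A, nu (b k) * eta j = nu a) /\
      (forall x : A, rad_diff_ideal_gen DA (fun y => exists k, y = b k) x))
  (p : A -> Prop) (hp : is_prime_diff_ideal DA p)
  (hker : forall a, nu a = 0 -> p a) :
  is_prime_diff_ideal DB (qset nu p).
Proof.
have fr := frac hB hnu hgen hb hp.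
have hsub := ideal_sub hp.
have hk := ker_sub hp hker.
case: (hp) => [[p0 pD pM]] pd p1 hpr.
split.
- split.
  + by exists 1, 0; rewrite mulr0 rmorph0.
  + move=> x y [s1 [a1 [n1 [pa1 e1]]]] [s2 [a2 [n2 [pa2 e2]]]].
    exists (s1 * s2), (s2 * a1 + s1 * a2); split; first by case/hpr.
    split; first by apply: pD; apply: pM.
    by rewrite rmorphM alg3 e1 e2 rmorphD !rmorphM.
  + move=> r x [s [a [ns [pa e]]]].
    have [t [c [nt et]]] := fr r.
    exists (t * s), (c * a); split; first by case/hpr.
    split; first by apply: pM.
    by rewrite rmorphM alg2 et e rmorphM.
- move=> i x [s [a [ns [pa e]]]].
  exists (s * s), (s * DA i a - DA i s * a); split; first by case/hpr.
  split; last exact: der_frac.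
  by apply: hsub; apply: pM => //; apply: pd.
- case=> s [a [ns [pa e]]]; apply: ns; apply: (hk _ a) => //.
  by rewrite -e mulr1.
- move=> x y [s [a [ns [pa e]]]].
  have [t [c [nt et]]] := fr x.
  have [u [f [nu' eu]]] := fr y.
  have H : p (s * (c * f)).
    apply: (hk _ (t * u * a)); last by apply: pM.
    rewrite !rmorphM -et -eu -e -alg2 -rmorphM mulrCA.
    done.
  case/hpr: H => // /hpr [] hc.
    by left; exists t, c.
  by right; exists u, f.
Qed.

Lemma q_contr (A B : comPzRingType) (d : nat) (DA : 'I_d -> A -> A)
  (nu : {rmorphism A -> B}) (p : A -> Prop) (hp : is_prime_diff_ideal DA p)
  (hker : forall a, nu a = 0 -> p a) a : qset nu p (nu a) <-> p a.
Proof.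
split.
- case=> s [c [ns [pc e]]].
  have : p (s * a) by apply: (ker_sub hp hker (y := c)) => //; rewrite rmorphM.
  by case: hp => _ _ _ hpr /hpr [].
- by move=> pa; exists 1, a; rewrite rmorph1 mul1r; split => //; case: hp.
Qed.

Lemma contr_prime (A B : comPzRingType) (d : nat)
  (DA : 'I_d -> A -> A) (DB : 'I_d -> B -> B)
  (nu : {rmorphism A -> B}) (hnu : commutes_with_ders DA DB nu)
  (q : B -> Prop) (hq : is_prime_diff_ideal DB q) :
  is_prime_diff_ideal DA (fun a => q (nu a)).
Proof.
case: hq => [[q0 qD qM]] qd q1 qpr; split.
- split.
  + by rewrite rmorph0.
  + by move=> x y hx hy; rewrite rmorphD; apply: qD.
  + by move=> r x hx; rewrite rmorphM; apply: qM.
- by move=> i x hx; rewrite hnu; apply: qd.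
- by rewrite rmorph1.
- by move=> x y; rewrite rmorphM => /qpr.
Qed.

Lemma contr_ker (A B : comPzRingType) (d : nat) (DB : 'I_d -> B -> B)
  (nu : {rmorphism A -> B}) (q : SpecD DB) :
  forall e, nu e = 0 -> proj1_sig q (nu e).
Proof. by case: q => q [[q0 _ _] _ _ _] e /= ->. Qed.

Lemma q_round (A B : comPzRingType) (d : nat)
  (DA : 'I_d -> A -> A) (DB : 'I_d -> B -> B) (hB : is_diff_ring DB)
  (nu : {rmorphism A -> B}) (hnu : commutes_with_ders DA DB nu)
  (m : nat) (eta : 'I_m -> B)
  (hgen : diff_generated DB nu eta)
  (hb : forall j : 'I_m, exists (n : nat) (b : 'I_n -> A),
      (forall k, exists a : A, nu (b k) * eta j = nu a) /\
      (forall x : A, rad_diff_ideal_gen DA (fun y => exists k, y = b k) x))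
  (q : B -> Prop) (hq : is_prime_diff_ideal DB q) x :
  qset nu (fun a => q (nu a)) x <-> q x.
Proof.
have hp := contr_prime hnu hq.
split.
- case=> s [a [ns [pa e]]]; rewrite -e in pa.
  by case: hq => _ _ _ /(_ _ _ pa) [].
- move=> qx; have [s [a [ns e]]] := frac hB hnu hgen hb hp x.
  exists s, a; split => //; split => //; rewrite -e.
  by case: hq => [[_ _ qM]] _ _ _; apply: qM.
Qed.

Lemma sig_ext (T : Type) (P : (T -> Prop) -> Prop) (x y : {f : T -> Prop | P f}) :
  (forall t, proj1_sig x t <-> proj1_sig y t) -> x = y.
Proof.
case: x y => [f hf] [g hg] /= H.
have E : f = g.
  by apply: functional_extensionality => t; apply: propositional_extensionality.
subst; f_equal; apply: proof_irrelevance.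
Qed.

Lemma sig_eq2 (T : Type) (P : T -> Prop) (x y : {t | P t}) :
  proj1_sig x = proj1_sig y -> x = y.
Proof.
case: x y => [f hf] [g hg] /= E; subst; f_equal; apply: proof_irrelevance.
Qed.

Unset Implicit Arguments.

Theorem lemma2p3 (A B : comPzRingType) (d : nat)
  (DA : 'I_d -> A -> A) (DB : 'I_d -> B -> B)
  (hA : is_diff_ring DA) (hB : is_diff_ring DB)
  (nu : {rmorphism A -> B}) (hnu : commutes_with_ders DA DB nu)
  (m : nat) (eta : 'I_m -> B)
  (hgen : diff_generated DB nu eta)
  (hb : forall j : 'I_m, exists (n : nat) (b : 'I_n -> A),
      (forall k, exists a : A, nu (b k) * eta j = nu a) /\
      (forall x : A, rad_diff_ideal_gen DA (fun y => exists k, y = b k) x)) :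
  exists h : SpecD DB -> VD DA (fun a => nu a = 0),
    (forall (q : SpecD DB) (a : A),
        proj1_sig (proj1_sig (h q)) a <-> proj1_sig q (nu a)) /\
    homeomorphism (@kolchin_closed B d DB)
                  (@VD_closed A d DA (fun a => nu a = 0)) h.
Proof.
pose h (q : SpecD DB) : VD DA (fun a => nu a = 0) :=
  exist (fun P : SpecD DA => forall e, nu e = 0 -> proj1_sig P e)
    (exist _ (fun a => proj1_sig q (nu a)) (contr_prime hnu (proj2_sig q)))
    (contr_ker q).
pose g (P : VD DA (fun a => nu a = 0)) : SpecD DB :=
  exist _ (qset nu (proj1_sig (proj1_sig P)))
    (q_prime hB hnu hgen hb (proj2_sig (proj1_sig P)) (proj2_sig P)).
exists h; split; first by [].
exists g; split.
- move=> q; apply: sig_ext => x /=.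
  exact: (q_round hB hnu hgen hb (proj2_sig q)).
- move=> [[p hp] hk]; apply: sig_eq2; apply: sig_ext => a /=.
  exact: (q_contr hp hk).
- move=> C [C' [[E hE] hC]].
  exists (fun y => exists e, E e /\ y = nu e) => q.
  rewrite hC hE /=; split.
  + by move=> H y [e [Ee ->]]; apply: H.
  + by move=> H e Ee; apply: H; exists e.
- move=> C [F hF].
  exists (fun P' : SpecD DA => forall a, (exists f s, F f /\ nu s * f = nu a) ->
             proj1_sig P' a).
  split; first by exists (fun a => exists f s, F f /\ nu s * f = nu a).
  move=> [[p hp] hk] /=; rewrite hF /=; split.
  + move=> H a [f [s [Ff e]]].
    apply/(q_contr hp hk); rewrite -e.
    by case: (q_prime hB hnu hgen hb hp hk) => [[_ _ qM]] _ _ _; apply: qM; apply: H.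
  + move=> H f Ff.
    have [s [a [ns e]]] := frac hB hnu hgen hb hp f.
    exists s, a; split => //; split => //; apply: H; exists f, s; exact: (conj Ff e).
Qed.
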